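(* Let $L$ be a finite field of characteristic $p$ and cardinality $q>2$. Let $s$ be a positive integer with $s\equiv 1\pmod{p-1}$ and $\gcd(s,q-1)=1$, and let $f\colon L\to L$ be the power function $f(x)=x^s$. Then $\mathfrak{D}(f)\equiv 0\pmod 3$.
   Context: Let $\mu$ be the canonical additive character of $L$, $\mu(x)=\exp(2i\pi\,\mathrm{Tr}(x)/p)$, where $\mathrm{Tr}$ is the trace of $L/\mathbb{F}_p$. The Fourier coefficient of $f$ at $a\in L$ is $\widehat{f}(a)=\sum_{x\in L}\mu(ax+f(x))$; under the hypothesis $s\equiv 1\pmod{p-1}$ these are rational integers. Define $\mathfrak{D}(f)=\prod_{a\in L^{\times}}\widehat{f}(a)$. *)

(* Defs.v *)
From mathcomp Require Import all_boot all_order all_algebra all_field.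
Set Implicit Arguments. Unset Strict Implicit. Unset Printing Implicit Defensive.
Import Order.TTheory GRing.Theory Num.Theory.
Local Open Scope ring_scope.

Definition absTrace (L : finFieldType) (p : nat) (x : L) : L :=
  \sum_(i < logn p #|L|) x ^+ (p ^ i).

Definition absTraceNat (L : finFieldType) (p : nat) (x : L) : nat :=
  oapp (@nat_of_ord p) 0%N [pick k : 'I_p | (k%:R : L) == absTrace p x].

(* exp(2 i pi / p) in algC: p.-root (-1) is exp(i pi / p)
   (the root of -1 with minimal nonnegative argument). *)
Definition zeta_p (p : nat) : algC := (p.-root (-1)) ^+ 2.

Definition mu (L : finFieldType) (p : nat) (x : L) : algC :=
  zeta_p p ^+ absTraceNat p x.

Definition fourier (L : finFieldType) (p : nat) (f : L -> L) (a : L) : algC :=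
  \sum_(x : L) mu p (a * x + f x).

Definition frakD (L : finFieldType) (p : nat) (f : L -> L) : algC :=
  \prod_(a : L | a != 0) fourier p f a.

(* Main.v *)
Require Import Defs.
From mathcomp Require Import all_boot all_order all_algebra all_field zify ring.
Import Order.TTheory GRing.Theory Num.Theory.
Set Implicit Arguments. Unset Strict Implicit. Unset Printing Implicit Defensive.
Local Open Scope ring_scope.


Lemma frob_pow (L : finFieldType) p (hp : p \in [pchar L]) (x y : L) i :
  (x + y) ^+ (p ^ i) = x ^+ (p ^ i) + y ^+ (p ^ i).
Proof. by apply: exprDn_pchar; rewrite pnatX (pnatE _ (pcharf_prime hp)) hp. Qed.

Lemma tr_add (L : finFieldType) p (hp : p \in [pchar L]) (x y : L) :
  absTrace p (x + y) = absTrace p x + absTrace p y.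
Proof. by rewrite /absTrace -big_split; apply: eq_bigr => i _; apply: frob_pow. Qed.

Lemma fix_pow (L : finFieldType) p (c : L) i : c ^+ p = c -> c ^+ (p ^ i) = c.
Proof. by move=> hc; elim: i => [|i IH]; rewrite ?expr1 // expnSr exprM IH hc. Qed.

Lemma tr_scale (L : finFieldType) p (c x : L) :
  c ^+ p = c -> absTrace p (c * x) = c * absTrace p x.
Proof.
move=> hc; rewrite /absTrace mulr_sumr; apply: eq_bigr => i _.
by rewrite exprMn (fix_pow _ hc).
Qed.

Lemma card_L (L : finFieldType) p (hp : p \in [pchar L]) :
  #|L| = (p ^ logn p #|L|)%N.
Proof. exact: (card_pprimeChar hp). Qed.

Lemma tr_frob (L : finFieldType) p (hp : p \in [pchar L]) (x : L) :
  absTrace p x ^+ p = absTrace p x.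
Proof.
rewrite -(pFrobenius_autE hp) rmorph_sum /=.
under eq_bigr do rewrite pFrobenius_autE -exprM -expnSr.
rewrite /absTrace; set n := logn p #|L|.
have := big_ord_recl (idx := 0 : L) (op := +%R) n (fun i => x ^+ (p ^ i)).
rewrite big_ord_recr /= expn0 expr1 -(card_L hp) expf_card => /eqP.
by rewrite [x + _]addrC (can_eq (addrK x)) => /eqP ->.
Qed.

Lemma natr_modp (L : finFieldType) p (hp : p \in [pchar L]) (m n : nat) :
  (m%:R = n%:R :> L) -> m = n %[mod p].
Proof.
wlog le: m n / (m <= n)%N.
  move=> H; case: (leqP m n) => [|/ltnW] h E; first exact: H.
  by apply/esym/H.
move=> E; apply/esym/eqP; rewrite eqn_mod_dvd // (dvdn_pcharf hp) natrB // E.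
by rewrite subrr.
Qed.

Lemma natr_modpE (L : finFieldType) p (hp : p \in [pchar L]) (m : nat) :
  (m%:R : L) = (m %% p)%:R.
Proof. by rewrite {1}(divn_eq m p) natrD natrM (pcharf0 hp) mulr0 add0r. Qed.

Lemma fp_elt (L : finFieldType) p (hp : p \in [pchar L]) (y : L) :
  y ^+ p = y -> exists2 k, (k < p)%N & y = k%:R.
Proof.
move=> hy; have pr := pcharf_prime hp; have p1 := prime_gt1 pr.
case: (boolP [exists k : 'I_p, y == k%:R]) => [/existsP[k /eqP ->]|Hn].
  by exists k.
exfalso.
pose P : {poly L} := 'X^p - 'X.
have szP : size P = p.+1 by rewrite size_polyDl ?size_polyXn // size_polyN size_polyX.
have nzP : P != 0 by rewrite -size_poly_eq0 szP.
pose rs := y :: [seq (k%:R : L) | k <- iota 0 p].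
have : (size rs < size P)%N.
  apply: (@max_poly_roots _ P rs nzP).
    apply/allP => z; rewrite inE => /orP[/eqP ->|/mapP[k _ ->]];
      rewrite rootE !hornerE ?hy ?subrr //.
    by rewrite -(pFrobenius_autE hp) rmorph_nat subrr.
  rewrite /= map_inj_in_uniq ?iota_uniq ?andbT.
    apply/mapP; case=> k; rewrite mem_iota add0n /= => kp hk.
    by apply: (negP Hn); apply/existsP; exists (Ordinal kp); rewrite hk.
  move=> i j; rewrite !mem_iota !add0n /= => ip jp E.
  by move: (natr_modp hp E); rewrite !modn_small.
by rewrite szP /= size_map size_iota ltnn.
Qed.


Lemma algC_1neqN1 : (1 : algC) != -1.
Proof.
apply/eqP => E; have : (2%:R : algC) == 0 by rewrite mulr2n {2}E subrr.
by rewrite pnatr_eq0.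
Qed.

Lemma rootN1_neqN1 p : prime p -> p.-root (-1 : algC) != -1.
Proof.
move=> pr; have pp := prime_gt0 pr; set r := p.-root _.
have rp : r ^+ p = -1 by rewrite /r rootCK.
apply/eqP => Er.
have [w pw] := C_prim_root_exists pp.
have wp : w ^+ p = 1 := prim_expr_order pw.
have w1 : w != 1.
  apply/eqP => E; have := prim_order_dvd pw 1; rewrite E expr1 eqxx dvdn1.
  by move=> /eqP E1; move: (prime_gt1 pr); rewrite E1.
have oddp : (-1 : algC) ^+ p = -1 by rewrite -{1}Er rp.
clear pw; wlog Imw : w wp w1 / 'Im w <= 0.
  move=> H; case: (boolP ('Im w <= 0)) => [|hI]; first exact: H.
  have {}hI : 0 <= 'Im w by rewrite ltW // real_ltNge ?rpred0 ?Creal_Im.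
  apply: (H w^*); rewrite ?Im_conj ?oppr_le0 //.
    by rewrite -rmorphXn wp rmorph1.
  by apply: contra w1 => /eqP E; rewrite -[w]conjCK E rmorph1.
set y := - w.
have yp : y ^+ p = -1 by rewrite /y exprNn wp mulr1.
have Imy : 0 <= 'Im y by rewrite /y raddfN oppr_ge0.
have := rootC_Re_max pp yp Imy; rewrite -/r Er /y !raddfN /=.
rewrite (Creal_ReP 1 (rpred1 _)) lerN2 => Rew.
have nw : `|w| = 1.
  by apply/eqP; rewrite -(pexpr_eq1 pp) ?normr_ge0 // -normrX wp normr1.
have eqR : 'Re w = `|w| by apply/le_anti; rewrite (leif_Re_Creal w).1 nw Rew.
move: (leif_Re_Creal w).2; rewrite eqR eqxx => /esym w0.
by move: w1; rewrite -(ger0_norm w0) nw eqxx.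
Qed.

Lemma zeta_p1 p : (0 < p)%N -> zeta_p p ^+ p = 1.
Proof.
by move=> pp; rewrite /zeta_p -exprM mulnC exprM rootCK // sqrrN expr1n.
Qed.

Lemma zeta_neq1 p : prime p -> zeta_p p != 1.
Proof.
move=> pr; rewrite /zeta_p sqrf_eq1 negb_or rootN1_neqN1 // andbT.
apply/eqP => E; have := rootCK (prime_gt0 pr) (-1 : algC).
rewrite E expr1n => /eqP; exact/negP/algC_1neqN1.
Qed.

Lemma zeta_prim p : prime p -> p.-primitive_root (zeta_p p).
Proof.
move=> pr; have pp := prime_gt0 pr.
have [m pm mp] := prim_order_exists pp (zeta_p1 pp).
have := pr; case/primeP => _ /(_ m mp) /orP[/eqP m1|/eqP mE]; last by rewrite mE in pm.
move: pm; rewrite m1 => /prim_expr_order; rewrite expr1 => E.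
by move: (zeta_neq1 pr); rewrite E eqxx.
Qed.


Lemma sum_inj (T : finType) (h : T -> T) (F : T -> algC) :
  injective h -> \sum_x F (h x) = \sum_x F x.
Proof. by move=> hi; rewrite [RHS](reindex_inj hi). Qed.

Lemma tnP (L : finFieldType) p (hp : p \in [pchar L]) (x : L) :
  ((absTraceNat p x)%:R = absTrace p x) /\ (absTraceNat p x < p)%N.
Proof.
rewrite /absTraceNat; case: pickP => [k /eqP hk|H] /=; first by split.
have [k kp hk] := fp_elt hp (tr_frob hp x).
by move: (H (Ordinal kp)); rewrite /= hk eqxx.
Qed.

Lemma tnE (L : finFieldType) p (hp : p \in [pchar L]) (x : L) :
  (absTraceNat p x)%:R = absTrace p x.
Proof. exact: (proj1 (tnP hp x)). Qed.

Lemma zeta_mod p m : (0 < p)%N -> zeta_p p ^+ m = zeta_p p ^+ (m %% p).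
Proof.
by move=> pp; rewrite {1}(divn_eq m p) exprD mulnC exprM zeta_p1 // expr1n mul1r.
Qed.

Lemma zeta_congr p m n : (0 < p)%N -> m = n %[mod p] -> zeta_p p ^+ m = zeta_p p ^+ n.
Proof. by move=> pp E; rewrite zeta_mod // E -zeta_mod. Qed.

Lemma mu_add (L : finFieldType) p (hp : p \in [pchar L]) (x y : L) :
  mu p (x + y) = mu p x * mu p y.
Proof.
have pp := prime_gt0 (pcharf_prime hp).
rewrite /mu -exprD; apply: zeta_congr => //; apply: (natr_modp hp).
by rewrite natrD !(tnE hp) tr_add.
Qed.

Lemma tr0 (L : finFieldType) p (hp : p \in [pchar L]) : absTrace p (0 : L) = 0.
Proof.
have pp := prime_gt0 (pcharf_prime hp).
by rewrite -(mul0r 0) tr_scale ?mul0r // expr0n /= eqn0Ngt pp.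
Qed.

Lemma mu_eq1 (L : finFieldType) p (hp : p \in [pchar L]) (x : L) :
  (mu p x == 1) = (absTrace p x == 0).
Proof.
have pr := pcharf_prime hp.
by rewrite /mu -(prim_order_dvd (zeta_prim pr)) (dvdn_pcharf hp) (tnE hp).
Qed.

Lemma mu0 (L : finFieldType) p (hp : p \in [pchar L]) : mu p (0 : L) = 1.
Proof. by apply/eqP; rewrite (mu_eq1 hp) tr0. Qed.

Lemma mu_scale (L : finFieldType) p (hp : p \in [pchar L]) k (x : L) :
  mu p (k%:R * x) = mu p x ^+ k.
Proof.
have pp := prime_gt0 (pcharf_prime hp).
rewrite /mu -exprM; apply: zeta_congr => //; apply: (natr_modp hp).
rewrite natrM !(tnE hp) tr_scale; first exact: mulrC.
by rewrite -(pFrobenius_autE hp) rmorph_nat.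
Qed.

Lemma mu_unity (L : finFieldType) p (hp : p \in [pchar L]) (x : L) :
  mu p x ^+ p = 1.
Proof.
have pp := prime_gt0 (pcharf_prime hp).
by rewrite /mu -exprM mulnC exprM zeta_p1 // expr1n.
Qed.

Lemma mu_Aint (L : finFieldType) p (hp : p \in [pchar L]) (x : L) :
  mu p x \in Aint.
Proof.
have pp := prime_gt0 (pcharf_prime hp).
by apply: (Aint_unity_root pp); rewrite unity_rootE mu_unity.
Qed.

Lemma tr_nonzero (L : finFieldType) p (hp : p \in [pchar L]) :
  exists y : L, absTrace p y != 0.
Proof.
have pr := pcharf_prime hp; have p1 := prime_gt1 pr.
case: (boolP [exists y : L, absTrace p y != 0]) => [/existsP[y hy]|H].
  by exists y.
exfalso.
set n := logn p #|L|.
have cL := card_L hp; rewrite -/n in cL.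
have n0 : (0 < n)%N.
  rewrite lt0n; apply/eqP => n0; move: (finNzRing_gt1 L); rewrite cL n0.
  by [].
pose P : {poly L} := \sum_(i < n) 'X^(p ^ i).
have cP j : P`_j = \sum_(i < n) (j == (p ^ i)%N)%:R.
  by rewrite /P coef_sum; apply: eq_bigr => i _; rewrite coefXn.
have nzP : P != 0.
  apply/eqP => /(congr1 (fun P : {poly L} => P`_(p ^ n.-1))); rewrite cP coef0.
  rewrite -(prednK n0) big_ord_recr /= eqxx big1 ?add0r.
    by move/eqP; rewrite oner_eq0.
  move=> i _; rewrite eqn_exp2l //; case: i => i /= hi.
  by rewrite gtn_eqF.
have szP : (size P <= (p ^ n.-1).+1)%N.
  apply/leq_sizeP => j hj; rewrite cP big1 // => i _.
  case: eqP => // E; move: hj; rewrite E ltnNge leq_exp2l //.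
  by rewrite -ltnS prednK // ltn_ord.
have : (size (enum L) < size P)%N.
  apply: max_poly_roots nzP _ (enum_uniq _).
  apply/allP => y _; rewrite rootE horner_sum; under eq_bigr do rewrite hornerXn.
  by move/existsPn: H => /(_ y); rewrite negbK.
rewrite -cardE cL => /leq_trans /(_ szP) h.
have h2 : (2 * p ^ n.-1 <= p ^ n)%N.
  by rewrite -{2}(prednK n0) expnS leq_mul2r p1 orbT.
have h3 : (0 < p ^ n.-1)%N by rewrite expn_gt0 (prime_gt0 pr).
move: h h2 h3; set a := (p ^ n.-1)%N; set b := (p ^ n)%N; lia.
Qed.

Lemma sum_mu (L : finFieldType) p (hp : p \in [pchar L]) :
  \sum_(y : L) mu p y = 0.
Proof.
have [y0 hy0] := tr_nonzero hp.
have E : \sum_(y : L) mu p y = (\sum_(y : L) mu p y) * mu p y0.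
  rewrite [LHS](esym (sum_inj (mu p) (addIr y0))) mulr_suml; apply: eq_bigr => y _.
  by rewrite (mu_add hp).
move: E; set S := \sum_(y : L) _ => E.
have : S * (1 - mu p y0) = 0 by rewrite mulrBr mulr1 -E subrr.
move/eqP; rewrite mulf_eq0 subr_eq0 [1 == _]eq_sym (mu_eq1 hp) (negbTE hy0) orbF.
by move/eqP.
Qed.

Lemma sum_mu_mul (L : finFieldType) p (hp : p \in [pchar L]) (w : L) :
  \sum_(a : L) mu p (a * w) = if w == 0 then #|L|%:R else 0.
Proof.
case: eqP => [->|/eqP wnz].
  under eq_bigr do rewrite mulr0 (mu0 hp).
  by rewrite sumr_const.
by rewrite (sum_inj (mu p) (mulIf wnz)) sum_mu.
Qed.


Lemma unit_pow (L : finFieldType) (t : L) : t != 0 -> t ^+ (#|L|.-1) = 1.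
Proof.
move=> tnz; apply: (mulIf tnz); rewrite mul1r -exprSr prednK ?expf_card //.
exact: ltnW (finNzRing_gt1 L).
Qed.

Lemma pow_inj (L : finFieldType) s :
  (0 < s)%N -> (2 < #|L|)%N -> coprime s #|L|.-1 -> injective (fun x : L => x ^+ s).
Proof.
move=> sp q2 cop x y /= E.
have ez : (x == 0) = (y == 0).
  by have := expf_eq0 x s; have := expf_eq0 y s; rewrite sp /= E => <- <-.
case: (eqVneq y 0) => [y0|ynz].
  by rewrite y0; apply/eqP; rewrite ez y0.
have xnz : x != 0 by rewrite ez.
set t := x / y.
have ts : t ^+ s = 1 by rewrite /t expr_div_n E divff // expf_neq0.
have m0 : (0 < #|L|.-1)%N by rewrite -ltnS prednK //; lia.
have [a _ /dvdnP[k hk]] := Bezoutl s m0.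
rewrite gcdnC (eqP cop) in hk.
have tnz : t != 0 by rewrite /t mulf_neq0 ?invr_eq0.
have : t ^+ (1 + a * s) = 1 by rewrite hk mulnC exprM unit_pow // expr1n.
rewrite exprD expr1 mulnC exprM ts expr1n mulr1 /t => /eqP.
by move/eqP => E1; rewrite -(divfK ynz x) E1 mul1r.
Qed.

Lemma pow_bij (L : finFieldType) s :
  (0 < s)%N -> (2 < #|L|)%N -> coprime s #|L|.-1 -> bijective (fun x : L => x ^+ s).
Proof. by move=> *; apply: injF_bij; apply: pow_inj. Qed.

Lemma sum_unity_int (w : algC) p : (0 < p)%N -> w ^+ p = 1 ->
  \sum_(1 <= k < p) w ^+ k \in Num.int.
Proof.
move=> pp wp.
have E : \sum_(1 <= k < p) w ^+ k = \sum_(k < p) w ^+ k - 1.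
  rewrite -(prednK pp) big_ord_recl big_add1 big_mkord /= expr0.
  by rewrite addrC addKr.
rewrite E; case: (eqVneq w 1) => [->|w1].
  under eq_bigr do rewrite expr1n.
  by rewrite sumr_const card_ord rpredB ?rpredMn ?rpred1.
have : (w - 1) * \sum_(k < p) w ^+ k = 0 by rewrite -subrX1 wp subrr.
move/eqP; rewrite mulf_eq0 subr_eq0 (negbTE w1) /= => /eqP ->.
by rewrite sub0r rpredN rpred1.
Qed.

Lemma fourier_int (L : finFieldType) p (hp : p \in [pchar L]) (h : L -> L) :
  (forall k x, (0 < k < p)%N -> h (k%:R * x) = k%:R * h x) ->
  \sum_x mu p (h x) \in Num.int.
Proof.
move=> hh; have pr := pcharf_prime hp; have pp := prime_gt0 pr.
set S := \sum_x _.
have Sk k : (0 < k < p)%N -> S = \sum_x mu p (h x) ^+ k.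
  move=> /andP[k0 kp].
  have knz : (k%:R : L) != 0.
    by rewrite -(dvdn_pcharf hp); apply/negP => /(dvdn_leq k0); rewrite leqNgt kp.
  rewrite /S -(sum_inj (fun x => mu p (h x)) (mulfI knz)).
  by apply: eq_bigr => x _; rewrite hh ?k0 // (mu_scale hp).
have E : S *+ (p - 1) = \sum_x \sum_(1 <= k < p) mu p (h x) ^+ k.
  rewrite -(sumr_const_nat p 1 S).
  rewrite (@eq_big_nat _ _ _ 1 p _ (fun k => \sum_x mu p (h x) ^+ k)).
    exact: exchange_big.
  by move=> k /andP[k1 kp]; apply: Sk; rewrite k1.
have SA : S \in Aint by apply: rpred_sum => x _; apply: (mu_Aint hp).
have ZE : S *+ (p - 1) \in Num.int.
  by rewrite E; apply: rpred_sum => x _; apply: sum_unity_int; rewrite ?(mu_unity hp).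
apply: Cint_rat_Aint => //.
have pnz : ((p - 1)%:R : algC) != 0 by rewrite pnatr_eq0 subn_eq0 -ltnNge prime_gt1.
have -> : S = (S *+ (p - 1)) / (p - 1)%:R.
  by rewrite -[S *+ _]mulr_natr mulfK.
by rewrite rpred_div ?rpred_nat // (rpred_int_num _ ZE).
Qed.


Definition Wf (L : finFieldType) p s (a c : L) : algC :=
  \sum_(x : L) mu p (a * x + c * x ^+ s).

Definition Kc (L : finFieldType) s (u : L) : nat :=
  #|[pred x : L | x ^+ s + (1 - x) ^+ s == u]|.

Lemma sum4 (L : finFieldType) (F : L -> L -> L -> L -> algC) :
  \sum_a \sum_c \sum_x \sum_y F a c x y = \sum_x \sum_y \sum_a \sum_c F a c x y.
Proof.
transitivity (\sum_a \sum_x \sum_y \sum_c F a c x y).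
  apply: eq_bigr => a _; rewrite exchange_big; apply: eq_bigr => x _.
  exact: exchange_big.
rewrite exchange_big; apply: eq_bigr => x _; exact: exchange_big.
Qed.

Lemma Sigma_count (L : finFieldType) p (hp : p \in [pchar L]) s (u : L) :
  \sum_a \sum_c Wf p s a c ^+ 2 * mu p (- (a + c * u))
  = (#|L| ^ 2 * Kc s u)%:R.
Proof.
pose q : algC := #|L|%:R.
transitivity (\sum_a \sum_c \sum_x \sum_y
   (mu p (a * (x + y - 1)) * mu p (c * (x ^+ s + y ^+ s - u)))).
  apply: eq_bigr => a _; apply: eq_bigr => c _.
  rewrite /Wf expr2 mulr_suml mulr_suml; apply: eq_bigr => x _.
  rewrite mulr_sumr mulr_suml; apply: eq_bigr => y _.
  rewrite -!(mu_add hp); congr (mu p _); ring.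
rewrite sum4.
transitivity (\sum_(x : L) \sum_(y : L)
   ((if x + y - 1 == 0 then q else 0) * (if x ^+ s + y ^+ s - u == 0 then q else 0))).
  apply: eq_bigr => x _; apply: eq_bigr => y _.
  rewrite -!(sum_mu_mul hp) mulr_suml; apply: eq_bigr => a _.
  by rewrite mulr_sumr; apply: eq_bigr => c _; rewrite mulrC [c * _]mulrC.
transitivity (\sum_(x : L) (if x ^+ s + (1 - x) ^+ s == u then q * q else 0)).
  apply: eq_bigr => x _; rewrite (bigD1 (1 - x)) //= big1 ?addr0.
    rewrite [x + _]addrC subrK subrr eqxx subr_eq0.
    by case: eqP; rewrite ?mulr0.
  move=> y hy; have -> : (x + y - 1 == 0) = false.
    by apply/eqP => E; apply: (negP hy); apply/eqP; rewrite -[LHS]subr0 -E; ring.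
  by rewrite mul0r.
rewrite -big_mkcond sumr_const /Kc natrM -mulr_natl natrX expr2.
by rewrite mulr1 mulr_natr.
Qed.

Lemma eqAmod_sum (I : finType) (P : pred I) (F G : I -> algC) e :
  (forall i, P i -> (F i == G i %[mod e])%A) ->
  (\sum_(i | P i) F i == \sum_(i | P i) G i %[mod e])%A.
Proof.
move=> H; apply: (big_ind2 (fun x y => (x == y %[mod e])%A)) => //.
by move=> *; apply: eqAmodD.
Qed.

Lemma sum_nz_mu (L : finFieldType) p (hp : p \in [pchar L]) (w : L) :
  w != 0 -> \sum_(b | b != 0) mu p (b * w) = -1.
Proof.
move=> wnz; have := sum_mu_mul hp w; rewrite (negbTE wnz) (bigD1 0) //=.
by rewrite mul0r (mu0 hp) => /eqP; rewrite addrC addr_eq0 => /eqP.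
Qed.

Lemma W_c0 (L : finFieldType) p (hp : p \in [pchar L]) s (a : L) :
  Wf p s a 0 = if a == 0 then #|L|%:R else 0.
Proof.
rewrite /Wf -(sum_mu_mul hp); apply: eq_bigr => x _.
by rewrite mul0r addr0 mulrC.
Qed.

Lemma W_t (L : finFieldType) p s (c : L) :
  (0 < s)%N -> (2 < #|L|)%N -> coprime s #|L|.-1 -> c != 0 ->
  exists2 t, t != 0 & forall a, Wf p s a c = Wf p s (a * t) 1.
Proof.
move=> sp hq cop cnz; have [g gK Kg] := pow_bij sp hq cop.
set t := g c^-1.
have ts : t ^+ s = c^-1 by rewrite /t Kg.
have tnz : t != 0.
  apply/eqP => t0; move: ts; rewrite t0 expr0n eqn0Ngt sp /= => /esym/eqP.
  by rewrite invr_eq0 (negbTE cnz).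
exists t => // a; rewrite /Wf -(sum_inj _ (mulfI tnz)).
apply: eq_bigr => x _; congr (mu p _).
by rewrite exprMn ts [c * _]mulrA mulfV // !mul1r mulrA.
Qed.

Lemma Sigma_mod (L : finFieldType) p (hp : p \in [pchar L]) s (u : L) :
  (0 < s)%N -> (2 < #|L|)%N -> coprime s #|L|.-1 -> u != 0 ->
  (forall b : L, (Wf p s b 1 ^+ 2 == (b != 0)%:R %[mod 3])%A) ->
  (\sum_a \sum_c Wf p s a c ^+ 2 * mu p (- (a + c * u))
    == (#|L| ^ 2 + 1)%:R %[mod 3])%A.
Proof.
move=> sp hq cop unz Hv.
rewrite exchange_big (bigD1 0) //=.
have -> : \sum_a Wf p s a 0 ^+ 2 * mu p (- (a + 0 * u)) = (#|L| ^ 2)%:R.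
  rewrite (bigD1 0) //= big1 ?addr0.
    by rewrite W_c0 // eqxx mul0r !addr0 oppr0 (mu0 hp) mulr1 natrX.
  by move=> a anz; rewrite W_c0 // (negbTE anz) expr0n mul0r.
rewrite natrD eqAmodDl.
have Tc : forall c : L, c != 0 ->
   (\sum_a Wf p s a c ^+ 2 * mu p (- (a + c * u)) == - mu p (- (c * u)) %[mod 3])%A.
  move=> c cnz; have [t tnz Wt] := W_t p sp hq cop cnz.
  have tinz : t^-1 != 0 by rewrite invr_eq0.
  rewrite -(sum_inj _ (mulIf tinz)).
  have E : forall b, Wf p s (b * t^-1) c ^+ 2 * mu p (- (b * t^-1 + c * u))
     = Wf p s b 1 ^+ 2 * (mu p (b * - t^-1) * mu p (- (c * u))).
    move=> b; rewrite Wt divfK // -(mu_add hp); congr (_ * mu p _); ring.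
  rewrite (eq_bigr _ (fun b _ => E b)).
  apply: (@eqAmod_trans _ (\sum_b (b != 0)%:R * (mu p (b * - t^-1) * mu p (- (c * u))))).
    apply: eqAmod_sum => b _; apply: eqAmodMr => //.
    by rewrite rpredM ?(mu_Aint hp).
  rewrite (eq_bigr (fun b => (b != 0)%:R * mu p (b * - t^-1) * mu p (- (c * u)))) => [|b _]; last by rewrite mulrA.
  rewrite -mulr_suml (bigD1 0) //= eqxx mul0r add0r.
  under eq_bigr => b bnz do rewrite bnz mul1r.
  by rewrite sum_nz_mu ?oppr_eq0 // mulN1r.
apply: (@eqAmod_trans _ (\sum_(c | c != 0) - mu p (- (c * u)))).
  exact: eqAmod_sum.
rewrite sumrN.
have -> : \sum_(c | c != 0) mu p (- (c * u)) = -1.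
  rewrite -(@sum_nz_mu _ _ hp (- u) ltac:(by rewrite oppr_eq0)); apply: eq_bigr => c _.
  by rewrite mulrN.
by rewrite opprK.
Qed.


Lemma modlem a k : (a < 3 -> k < 3 -> (a*a*k) %% 3 = (a*a+1) %% 3 -> a != 0 /\ k = 2)%N.
Proof. by move: a k => [|[|[|a]]] [|[|[|k]]]. Qed.
Lemma modred q K : ((q * q * K) %% 3 = ((q %% 3) * (q %% 3) * (K %% 3)) %% 3)%N.
Proof. by rewrite [RHS]modnMmr -[in RHS]mulnA [RHS]modnMml [in RHS]mulnCA [RHS]modnMml mulnA. Qed.
Lemma modred2 q : ((q * q + 1) %% 3 = ((q %% 3) * (q %% 3) + 1) %% 3)%N.
Proof. by rewrite -[RHS]modnDml modnMm modnDml. Qed.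

Lemma sq_mod3 (m : int) : ((m %% 3)%Z != 0) -> exists e : int, m ^+ 2 - 1 = 3 * e.
Proof.
move=> h; set d := (m %/ 3)%Z; set r := (m %% 3)%Z.
have Em : m = d * 3 + r := divz_eq m 3.
have r0 : 0 <= r by apply: modz_ge0.
have r3 : r < 3 by apply: ltz_pmod.
have : r = 1 \/ r = 2 by move: h; rewrite -/r; lia.
by case=> hr; [exists (3 * d ^+ 2 + 2 * d) | exists (3 * d ^+ 2 + 4 * d + 1)];
  rewrite Em hr; ring.
Qed.

Lemma c_pow_s (L : finFieldType) p (hp : p \in [pchar L]) s k :
  (0 < s)%N -> s = 1 %[mod p.-1] -> (0 < k < p)%N -> (k%:R : L) ^+ s = k%:R.
Proof.
move=> sp hs /andP[k0 kp]; set c : L := k%:R.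
have cnz : c != 0.
  by rewrite /c -(dvdn_pcharf hp); apply/negP => /(dvdn_leq k0); rewrite leqNgt kp.
have cp : c ^+ p = c by rewrite -(pFrobenius_autE hp) rmorph_nat.
have pp := prime_gt0 (pcharf_prime hp).
have cp1 : c ^+ p.-1 = 1.
  by apply: (mulIf cnz); rewrite mul1r -exprSr prednK.
have /dvdnP[m hm] : (p.-1 %| s - 1)%N by rewrite -eqn_mod_dvd // hs.
by rewrite -(subnK sp) hm mulnC exprD exprM cp1 expr1n mul1r expr1.
Qed.

Unset Implicit Arguments.
Theorem mainTheorem3 (L : finFieldType) (p : nat) (hp : p \in [pchar L])
  (hq : (2 < #|L|)%N) (s : nat) (hs : (0 < s)%N)
  (hs1 : s = 1 %[mod p.-1]) (hcop : coprime s #|L|.-1) :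
  exists k : int, frakD p (fun x : L => x ^+ s) = ((3 * k)%R)%:~R.
Proof.
have pr := pcharf_prime hp.
have FW a : fourier p (fun x : L => x ^+ s) a = Wf p s a 1.
  by rewrite /fourier /Wf; apply: eq_bigr => x _; rewrite mul1r.
have Fint a : fourier p (fun x : L => x ^+ s) a \in Num.int.
  apply: (fourier_int hp (h := fun x => a * x + x ^+ s)) => k x hk.
  by rewrite exprMn (c_pow_s hp hs hs1 hk) mulrDr mulrCA.
case: (boolP [exists a : L, (a != 0) && (fourier p (fun x : L => x ^+ s) a / 3 \in Num.int)]).
  case/existsP => a0 /andP[a0nz a0i].
  have R : \prod_(a | (a != 0) && (a != a0)) fourier p (fun x : L => x ^+ s) a \in Num.int.
    by apply: rpred_prod => a _.
  have /intrP[k hk] : fourier p (fun x : L => x ^+ s) a0 / 3 *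
      \prod_(a | (a != 0) && (a != a0)) fourier p (fun x : L => x ^+ s) a \in Num.int.
    by rewrite rpredM.
  exists k; rewrite /frakD (bigD1 a0) //= intrM -hk.
  rewrite mulrA mulrCA mulrA mulfK //.
  by rewrite (_ : 3%:~R = 3%:R) // pnatr_eq0.
move=> Hn; exfalso.
have Hv : forall b : L, (Wf p s b 1 ^+ 2 == (b != 0)%:R %[mod 3])%A.
  move=> b; case: (eqVneq b 0) => [->|bnz] /=.
    suff -> : Wf p s (0 : L) 1 = 0 by rewrite expr0n.
    rewrite /Wf (eq_bigr (fun x => mu p (x ^+ s))) => [|x _]; last by rewrite mul0r mul1r add0r.
    by rewrite (sum_inj (mu p) (pow_inj hs hq hcop)) (sum_mu hp).
  have /intrP[m hm] := Fint b.
  have m3 : (m %% 3)%Z != 0.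
    apply/eqP => m0; move/existsPn: Hn => /(_ b) /negP; apply.
    rewrite bnz /= hm (divz_eq m 3) m0 addr0 intrM mulfK ?rpred_int //.
    by rewrite (_ : 3%:~R = 3%:R) // pnatr_eq0.
  have [e he] := sq_mod3 m3.
  rewrite -FW hm /eqAmod unfold_in /= ifF; last first.
    by apply/negbTE; rewrite pnatr_eq0.
  have -> : m%:~R ^+ 2 - 1 = (3 * e)%:~R :> algC.
    by rewrite -he rmorphB rmorphXn rmorph1.
  rewrite intrM mulrC (_ : 3%:~R = 3%:R) // mulKf ?Aint_int //.
  by rewrite pnatr_eq0.
have Hmod : forall u : L, u != 0 -> (#|L| ^ 2 * Kc s u == #|L| ^ 2 + 1 %[mod 3])%N.
  move=> u unz; have := Sigma_mod hp hs hq hcop unz Hv.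
  by rewrite (Sigma_count hp) -eqAmod_nat.
have K2 : forall u : L, u != 0 -> (2 <= Kc s u)%N.
  move=> u unz; move: (Hmod u unz) => /eqP; rewrite -mulnn modred modred2.
  case/(modlem (@ltn_pmod _ 3 isT) (@ltn_pmod _ 3 isT)) => _ K2.
  by rewrite (divn_eq (Kc s u) 3) K2 leq_addl.
have Hsum : (\sum_(u : L) Kc s u = #|L|)%N.
  rewrite -sum1_card [RHS](partition_big (fun x : L => x ^+ s + (1 - x) ^+ s) xpredT) //=.
  apply: eq_bigr => u _; rewrite sum1_card /Kc; apply: eq_card => x.
  by rewrite !inE.
have : (\sum_(u : L | u != (0%R : L)) 2 <= \sum_(u : L | u != (0%R : L)) Kc s u)%N.
  by apply: leq_sum => u; apply: K2.
rewrite sum_nat_const.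
have : (\sum_(u : L | u != (0%R : L)) Kc s u <= #|L|)%N.
  by rewrite -Hsum [X in (_ <= X)%N](bigD1 (0%R : L)) //= leq_addl.
have -> : #|[pred u : L | u != (0%R : L)]| = #|L|.-1 by rewrite cardC1.
lia.
Qed.
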